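(* Let $A$ be a basic connected finite dimensional algebra over an algebraically closed field $k$ with ordinary quiver $Q$ without oriented cycles. Let $\nu\colon kQ\twoheadrightarrow A$ be a presentation with $I=\mathsf{Ker}(\nu)$, and let $\psi\colon kQ\xrightarrow{\sim}kQ$ be an automorphism with $\psi(e_i)=e_i$ for all $i$ and $\psi(I)=I$. Let $\mu:=\nu\circ\psi$ (so $\mathsf{Ker}(\mu)=I$), and let $\overline\psi\colon A\xrightarrow{\sim}A$ be the $k$-algebra automorphism with $\overline\psi\circ\mu=\mu\circ\psi$. Then $\theta_\mu=\overline\psi_*\circ\theta_\nu$. In particular $\mathsf{Im}(\theta_\mu)=\overline\psi_*(\mathsf{Im}(\theta_\nu))$.
   Context: Fix a complete set $e_1,\dots,e_n$ of primitive orthogonal idempotents of $A$ indexed by $Q_0=\{1,\dots,n\}$, $E=\bigoplus ke_i$. A presentation is a surjective algebra map $\nu\colon kQ\twoheadrightarrow A$ with admissible kernel ($(kQ^+)^N\subseteq\mathsf{Ker}\,\nu\subseteq(kQ^+)^2$ for some $N\ge2$, $kQ^+$ the arrow ideal) and $\nu(e_i)=e_i$. $\mathsf{HH}^1(A)=Der_0(A)/Int_0(A)$, with $Der_0(A)$ the Lie algebra (commutator) of derivations vanishing on all $e_i$ and $Int_0(A)=\{a\mapsto ea-ae\mid e\in E\}$. For an automorphism $\phi$ of $A$ fixing every $e_i$, $\phi_*$ is the Lie algebra automorphism of $\mathsf{HH}^1(A)$ induced by $d\mapsto\phi\circ d\circ\phi^{-1}$. Walks: paths with formal inverse arrows allowed.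 $\sim_I$ is the smallest equivalence relation on walks with $\alpha\alpha^{-1}\sim_I e_y$, $\alpha^{-1}\alpha\sim_I e_x$ for arrows $\alpha\colon x\to y$, compatible with concatenation, and identifying two paths occurring with nonzero coefficient in a same minimal relation of $I$ (a nonzero $\sum t_iu_i\in I$, $t_i\neq0$, distinct paths, no nonempty proper subsum in $I$). $\pi_1(Q,I)$ is the group of classes of closed walks at a fixed vertex $x_0$. Fix a maximal tree $T$ of $Q$, $\gamma_x$ the minimal walk in $T$ from $x_0$ to $x$. For a presentation $\nu$ with kernel $I$ and a group homomorphism $f\colon\pi_1(Q,I)\to k^+$, $\theta_\nu(f)$ is the class of the derivation $\tilde f$ with $\tilde f(\nu(u))=f([\gamma_y^{-1}u\gamma_x]_I)\nu(u)$ for paths $u$ from $x$ to $y$. *)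

(* Defs.v *)
From HB Require Import structures.
From mathcomp Require Import all_boot all_order all_algebra.
From mathcomp Require Import falgebra.
From Stdlib Require Import ClassicalEpsilon.
Set Implicit Arguments.
Unset Strict Implicit.
Unset Printing Implicit Defensive.
Import GRing.Theory.
Local Open Scope ring_scope.

Section Quiver.
Variables (n : nat) (Ar : finType) (src tgt : Ar -> 'I_n).

(* A path: starting vertex together with its arrows listed in travel order.
   (x, [::]) is the trivial path e_x. *)
Definition qpath := ('I_n * seq Ar)%type.
Definition pend (p : qpath) : 'I_n := last p.1 (map tgt p.2).
Definition pvalid (p : qpath) : bool :=
  if p.2 is a :: s then (src a == p.1) && path (fun a b => tgt a == src b) a s
  else true.

Definition acyclic_quiver : Prop :=
  forall p : qpath, pvalid p -> pend p = p.1 -> p.2 = [::].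

(* Walks: letters are arrows (inl a) or formal inverses of arrows (inr a). *)
Definition letter := (Ar + Ar)%type.
Definition lsrc (l : letter) := match l with inl a => src a | inr a => tgt a end.
Definition ltgt (l : letter) := match l with inl a => tgt a | inr a => src a end.
Definition lflip (l : letter) : letter :=
  match l with inl a => inr a | inr a => inl a end.
Definition larrow (l : letter) : Ar := match l with inl a => a | inr a => a end.
Definition walk := ('I_n * seq letter)%type.
Definition wend (w : walk) : 'I_n := last w.1 (map ltgt w.2).
Definition wvalid (w : walk) : bool :=
  if w.2 is l :: s then (lsrc l == w.1) && path (fun l1 l2 => ltgt l1 == lsrc l2) l s
  else true.
Definition winv (s : seq letter) : seq letter := rev (map lflip s).
Definition path_walk (p : qpath) : walk := (p.1, map inl p.2).
Definition reduced (s : seq letter) : bool :=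
  if s is l :: s' then path (fun l1 l2 => l2 != lflip l1) l s' else true.

(* T : {set Ar} is a maximal (= spanning, Q being connected) tree of Q. *)
Definition twalk (T : {set Ar}) (s : seq letter) : bool :=
  all (fun l => larrow l \in T) s.
Definition spanning_tree (T : {set Ar}) : Prop :=
  (forall x y : 'I_n, exists s, [/\ wvalid (x, s), wend (x, s) = y & twalk T s]) /\
  (forall x s, wvalid (x, s) -> wend (x, s) = x -> twalk T s -> reduced s -> s = [::]).
Definition tree_geodesics (T : {set Ar}) (x0 : 'I_n) (gamma : 'I_n -> seq letter) :=
  forall x, [/\ wvalid (x0, gamma x), wend (x0, gamma x) = x, twalk T (gamma x) &
    forall s, wvalid (x0, s) -> wend (x0, s) = x -> twalk T s ->
      (size (gamma x) <= size s)%N].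

Section PathAlgebra.
Variable k : fieldType.

Definition kQ := qpath -> k.
Definition is_kQ (r : kQ) : Prop :=
  (forall p, ~~ pvalid p -> r p = 0) /\
  exists s : seq qpath, forall p, r p != 0 -> p \in s.
Definition kQadd (r s : kQ) : kQ := fun p => r p + s p.
Definition kQscale (c : k) (r : kQ) : kQ := fun p => c * r p.
(* multiplication: composition of paths, (u v) = "first v then u" *)
Definition kQmul (r s : kQ) : kQ := fun p =>
  \sum_(i < (size p.2).+1)
     r (pend (p.1, take i p.2), drop i p.2) * s (p.1, take i p.2).
Definition kQpath (u : qpath) : kQ := fun p => (p == u)%:R.
Definition kQe (x : 'I_n) : kQ := kQpath (x, [::]).
Definition kQone : kQ := fun p => (p.2 == [::])%:R.
Definition kQ_restrict (r : kQ) (S : pred qpath) : kQ :=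
  fun p => if S p then r p else 0.

Definition minimal_relation (I : kQ -> Prop) (r : kQ) : Prop :=
  [/\ I r, exists p, r p != 0 &
    forall S : pred qpath, (exists p, S p && (r p != 0)) ->
      (exists p, ~~ S p && (r p != 0)) -> ~ I (kQ_restrict r S)].

Inductive walk_equiv (I : kQ -> Prop) : walk -> walk -> Prop :=
| we_refl w : walk_equiv I w w
| we_sym w1 w2 : walk_equiv I w1 w2 -> walk_equiv I w2 w1
| we_trans w1 w2 w3 : walk_equiv I w1 w2 -> walk_equiv I w2 w3 -> walk_equiv I w1 w3
| we_cancel_src a : walk_equiv I (src a, [:: inl a; inr a]) (src a, [::])
| we_cancel_tgt a : walk_equiv I (tgt a, [:: inr a; inl a]) (tgt a, [::])
| we_rel r u v : minimal_relation I r -> r u != 0 -> r v != 0 ->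
    walk_equiv I (path_walk u) (path_walk v)
| we_ctx x s1 s2 w1 w2 : walk_equiv I w1 w2 ->
    w1.1 = wend (x, s1) -> w2.1 = w1.1 -> wend w1 = wend w2 ->
    wvalid (x, s1 ++ w1.2 ++ s2) -> wvalid (x, s1 ++ w2.2 ++ s2) ->
    walk_equiv I (x, s1 ++ w1.2 ++ s2) (x, s1 ++ w2.2 ++ s2).

Definition closed_at (x0 : 'I_n) (s : seq letter) : Prop :=
  wvalid (x0, s) /\ wend (x0, s) = x0.
(* a group homomorphism pi_1(Q,I) -> k^+, given on representatives
   (closed walks at x0): constant on ~_I-classes and additive. *)
Definition pi1_hom (I : kQ -> Prop) (x0 : 'I_n) (F : seq letter -> k) : Prop :=
  (forall s s', closed_at x0 s -> closed_at x0 s' ->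
     walk_equiv I (x0, s) (x0, s') -> F s = F s') /\
  (forall s s', closed_at x0 s -> closed_at x0 s' -> F (s ++ s') = F s + F s').

Definition kQ_aut (psi : kQ -> kQ) : Prop :=
  (forall r, is_kQ r -> is_kQ (psi r)) /\
  [/\
      forall r s, is_kQ r -> is_kQ s -> psi (kQadd r s) = kQadd (psi r) (psi s),
      forall c r, is_kQ r -> psi (kQscale c r) = kQscale c (psi r),
      forall r s, is_kQ r -> is_kQ s -> psi (kQmul r s) = kQmul (psi r) (psi s) &
      psi kQone = kQone] /\
      exists psi' : kQ -> kQ, [/\ forall r, is_kQ r -> is_kQ (psi' r),
         forall r, is_kQ r -> psi' (psi r) = r &
         forall r, is_kQ r -> psi (psi' r) = r].

Section Algebra.
Variable A : falgType k.

Definition alg_hom_kQ (nu : kQ -> A) : Prop :=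
  [/\ forall r s, is_kQ r -> is_kQ s -> nu (kQadd r s) = nu r + nu s,
      forall c r, is_kQ r -> nu (kQscale c r) = c *: nu r,
      forall r s, is_kQ r -> is_kQ s -> nu (kQmul r s) = nu r * nu s &
      nu kQone = 1].

(* presentation: surjective algebra map with admissible kernel, nu(e_i) = e_i;
   (kQ^+)^N is the span of the paths of length >= N. *)
Definition presentation (e : 'I_n -> A) (nu : kQ -> A) : Prop :=
  [/\ alg_hom_kQ nu,
      forall a, exists r, is_kQ r /\ nu r = a,
      forall i, nu (kQe i) = e i &
      exists N : nat, [/\ (2 <= N)%N,
        forall r, is_kQ r -> (forall p, (size p.2 < N)%N -> r p = 0) -> nu r = 0 &
        forall r, is_kQ r -> nu r = 0 -> forall p, (size p.2 < 2)%N -> r p = 0]].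

Definition in_ker (nu : kQ -> A) (r : kQ) : Prop := is_kQ r /\ nu r = 0.

Definition complete_prim_orth (e : 'I_n -> A) : Prop :=
  [/\ \sum_i e i = 1,
      forall i j, e i * e j = (if i == j then e i else 0) &
      forall i, e i != 0 /\
        forall a b : A, a * a = a -> b * b = b -> a * b = 0 -> b * a = 0 ->
          a + b = e i -> a = 0 \/ b = 0].

(* basic: the indecomposable projectives e_i A are pairwise non-isomorphic *)
Definition basic_wrt (e : 'I_n -> A) : Prop :=
  forall i j, i != j -> ~ exists a b : A,
    [/\ a = e i * a * e j, b = e j * b * e i, a * b = e i & b * a = e j].

End Algebra.
End PathAlgebra.
End Quiver.

Section Hochschild.
Variables (k : fieldType) (A : falgType k).

Definition connected_alg : Prop :=
  forall c : A, c * c = c -> (forall a, c * a = a * c) -> c = 0 \/ c = 1.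

Definition alg_aut (phi phiinv : A -> A) : Prop :=
  [/\ forall a b, phi (a + b) = phi a + phi b,
      forall (c : k) a, phi (c *: a) = c *: phi a,
      forall a b, phi (a * b) = phi a * phi b &
      phi 1 = 1] /\ cancel phi phiinv /\ cancel phiinv phi.

Definition derivation (d : A -> A) : Prop :=
  [/\ forall a b, d (a + b) = d a + d b,
      forall (c : k) a, d (c *: a) = c *: d a &
      forall a b, d (a * b) = d a * b + a * d b].

Definition inner0 (n : nat) (e : 'I_n -> A) (d : A -> A) : Prop :=
  exists c : 'I_n -> k, forall a,
    d a = (\sum_i c i *: e i) * a - a * (\sum_i c i *: e i).
(* equality of classes in HH^1(A) = Der_0(A)/Int_0(A) *)
Definition hh1_eq (n : nat) (e : 'I_n -> A) (d1 d2 : A -> A) : Prop :=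
  inner0 e (fun a => d1 a - d2 a).
Definition push (phi phiinv : A -> A) (d : A -> A) : A -> A :=
  fun a => phi (d (phiinv a)).
End Hochschild.

Definition theta_rep (n : nat) (Ar : finType) (src tgt : Ar -> 'I_n)
  (k : fieldType) (A : falgType k) (nu : kQ n Ar k -> A)
  (gamma : 'I_n -> seq (letter Ar)) (F : seq (letter Ar) -> k) (d : A -> A) : Prop :=
  derivation d /\
  forall u : qpath n Ar, pvalid src tgt u ->
    d (nu (@kQpath n Ar k u)) =
      F (gamma u.1 ++ map inl u.2 ++ winv (gamma (pend tgt u))) *: nu (@kQpath n Ar k u).

Definition theta (n : nat) (Ar : finType) (src tgt : Ar -> 'I_n)
  (k : fieldType) (A : falgType k) (nu : kQ n Ar k -> A)
  (gamma : 'I_n -> seq (letter Ar)) (F : seq (letter Ar) -> k) : A -> A :=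
  epsilon (inhabits id) (theta_rep src tgt nu gamma F).

(* Main.v *)
Require Import Defs.
From HB Require Import structures.
From mathcomp Require Import all_boot all_order all_algebra.
From mathcomp Require Import falgebra.
From Stdlib Require Import ClassicalEpsilon FunctionalExtensionality Classical.
Set Implicit Arguments.
Unset Strict Implicit.
Unset Printing Implicit Defensive.
Import GRing.Theory.
Local Open Scope ring_scope.

Section Walks.
Variables (n : nat) (Ar : finType) (src tgt : Ar -> 'I_n).

Fixpoint wv (x : 'I_n) (s : seq (letter Ar)) : bool :=
  match s with [::] => true | l :: s' => (lsrc src tgt l == x) && wv (ltgt src tgt l) s' end.

Lemma wvalidE x s : wvalid src tgt (x, s) = wv x s.
Proof.
case: s => //= l s; congr andb; elim: s l => //= l2 s IH l.
by rewrite IH eq_sym.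
Qed.

Lemma wend_cons x l s : wend src tgt (x, l :: s) = wend src tgt (ltgt src tgt l, s).
Proof. by []. Qed.

Lemma wv_cat x s1 s2 : wv x (s1 ++ s2) = wv x s1 && wv (wend src tgt (x, s1)) s2.
Proof. by elim: s1 x => [|l s1 IH] x //=; rewrite IH andbA. Qed.

Lemma wend_cat x s1 s2 : wend src tgt (x, s1 ++ s2) = wend src tgt (wend src tgt (x, s1), s2).
Proof. by rewrite /wend /= map_cat last_cat. Qed.

Lemma winv_cons (l : letter Ar) s : winv (l :: s) = rcons (winv s) (lflip l).
Proof. by rewrite /winv /= rev_cons. Qed.

Lemma winv_rcons (l : letter Ar) s : winv (rcons s l) = lflip l :: winv s.
Proof. by rewrite /winv map_rcons rev_rcons. Qed.

Lemma wv_winv x s : wv x s ->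
  wv (wend src tgt (x, s)) (winv s) /\ wend src tgt (wend src tgt (x, s), winv s) = x.
Proof.
elim: s x => [|l s IH] x //=.
case/andP=> /eqP <- hs; have [h1 h2] := IH _ hs.
rewrite winv_cons -cats1 wv_cat wend_cat wend_cons h1 h2 /=.
by case: l {hs h1 h2} => a /=; rewrite eqxx.
Qed.

Lemma pvalidE (p : qpath n Ar) : pvalid src tgt p = wv p.1 (map inl p.2).
Proof.
case: p => x [|a s] //=; congr andb; elim: s a => //= b s IH a.
by rewrite IH eq_sym.
Qed.

Lemma pendE (p : qpath n Ar) : pend tgt p = wend src tgt (p.1, map inl p.2).
Proof. by rewrite /pend /wend /= -map_comp. Qed.

End Walks.

Section KQ.
Variables (n : nat) (Ar : finType) (src tgt : Ar -> 'I_n) (k : fieldType).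
Notation kq := (kQ n Ar k).
Notation isk := (@is_kQ n Ar src tgt k).

Lemma valid_nz (r : kq) p : isk r -> r p != 0 -> pvalid src tgt p.
Proof. by case=> h _ nz; apply/negP => /negP /h; apply/eqP. Qed.

Lemma isk_restrict (r : kq) S : isk r -> isk (kQ_restrict r S).
Proof.
case=> h [s hs]; split=> [p hp|]; first by rewrite /kQ_restrict h // if_same.
exists s => p; rewrite /kQ_restrict; case: (S p); [exact: hs | by rewrite eqxx]. Qed.

Lemma isk_add (r s : kq) : isk r -> isk s -> isk (kQadd r s).
Proof.
case=> h1 [l1 hl1] [h2 [l2 hl2]]; split=> [p hp|]; first by rewrite /kQadd h1 // h2 // addr0.
exists (l1 ++ l2) => p; rewrite /kQadd mem_cat.
case: (eqVneq (r p) 0) => [->|/hl1 -> //]; rewrite add0r => /hl2 ->; by rewrite orbT.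
Qed.

Lemma isk_scale c (r : kq) : isk r -> isk (kQscale c r).
Proof.
case=> h [l hl]; split=> [p hp|]; first by rewrite /kQscale h // mulr0.
by exists l => p; rewrite /kQscale mulf_eq0 negb_or => /andP [_ /hl].
Qed.

Lemma isk_path (u : qpath n Ar) : pvalid src tgt u -> isk (kQpath k u).
Proof.
move=> hu; split=> [p hp|]; rewrite /kQpath.
  by case: eqP => // e; rewrite e hu in hp.
by exists [:: u] => p; rewrite mem_seq1; case: (p == u) => //; rewrite eqxx.
Qed.

Lemma isk_zero : isk (fun _ => 0).
Proof. by split=> //; exists [::] => p; rewrite eqxx. Qed.

Lemma pvalid_split (p : qpath n Ar) i :
  pvalid src tgt (p.1, take i p.2) ->
  pvalid src tgt (pend tgt (p.1, take i p.2), drop i p.2) -> pvalid src tgt p.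
Proof.
rewrite !pvalidE /= (pendE src) => h1 h2.
by rewrite -(cat_take_drop i p.2) map_cat wv_cat h1 h2.
Qed.

Lemma isk_mul (r s : kq) : isk r -> isk s -> isk (kQmul tgt r s).
Proof.
move=> hr hs; have [h1 [l1 hl1]] := hr; have [h2 [l2 hl2]] := hs.
have key : forall p (i : 'I_(size p.2).+1),
  r (pend tgt (p.1, take i p.2), drop i p.2) * s (p.1, take i p.2) != 0 ->
  pvalid src tgt p /\ p \in [seq (b.1, b.2 ++ t.2) | b <- l2, t <- l1].
  move=> p i; rewrite mulf_eq0 negb_or => /andP [nr ns]; split.
    exact: (pvalid_split (valid_nz hs ns) (valid_nz hr nr)).
  have -> : p = ((p.1, take i p.2).1, (p.1, take i p.2).2 ++ (pend tgt (p.1, take i p.2), drop i p.2).2).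
    by rewrite /= cat_take_drop -surjective_pairing.
  by apply: allpairs_f; [apply: hl2 | apply: hl1].
split=> [p hp|].
  rewrite /kQmul big1 // => i _; apply/eqP; apply/negPn/negP => /key [hv _].
  by rewrite hv in hp.
exists [seq (b.1, b.2 ++ t.2) | b <- l2, t <- l1] => p; apply: contraR => hp.
rewrite /kQmul big1 // => i _; apply/eqP; apply/negPn/negP => /key [_ hv].
by rewrite hv in hp.
Qed.

Lemma mul_e_left (r : kq) y :
  kQmul tgt (kQe k y) r = kQ_restrict r (fun p => pend tgt p == y).
Proof.
apply: functional_extensionality => -[x l]; rewrite /kQmul /kQ_restrict /=.
rewrite big_ord_recr /= big1 ?add0r.
  rewrite take_size drop_size /kQe /kQpath /= xpair_eqE eqxx andbT.
  by case: (pend tgt (x, l) == y); rewrite ?mul1r ?mul0r.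
move=> i _; rewrite /kQe /kQpath xpair_eqE.
have -> : (drop i l == [::]) = false.
  by apply/negbTE; rewrite -size_eq0 size_drop subn_eq0 -ltnNge ltn_ord.
by rewrite andbF mul0r.
Qed.

Lemma mul_e_right (r : kq) x :
  kQmul tgt r (kQe k x) = kQ_restrict r (fun p => p.1 == x).
Proof.
apply: functional_extensionality => -[y l]; rewrite /kQmul /kQ_restrict /=.
rewrite big_ord_recl /= big1 ?addr0.
  rewrite take0 drop0 /kQe /kQpath /= xpair_eqE eqxx andbT.
  by case: (y == x); rewrite ?mulr1 ?mulr0.
move=> i _; rewrite /kQe /kQpath xpair_eqE.
have -> : (take (bump 0 i) l == [::]) = false.
  apply/negbTE; rewrite -size_eq0 size_take.
  by case: ifP => _ //; rewrite /bump /=; case: (size l) i => [[]|].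
by rewrite andbF mulr0.
Qed.

End KQ.

Section Alg.
Variables (n : nat) (Ar : finType) (src tgt : Ar -> 'I_n) (k : fieldType) (A : falgType k).
Notation kq := (kQ n Ar k).
Notation isk := (@is_kQ n Ar src tgt k).

Lemma nu0 (nu : kq -> A) : alg_hom_kQ src tgt nu -> nu (fun _ => 0) = 0.
Proof.
case=> _ hs _ _.
have -> : (fun _ : qpath n Ar => (0 : k)) = kQscale 0 (fun _ => 0).
  by apply: functional_extensionality => p; rewrite /kQscale mul0r.
by rewrite hs ?scale0r //; apply: isk_zero.
Qed.

Lemma uniq_der (nu : kq -> A) (d1 d2 : A -> A) :
  alg_hom_kQ src tgt nu -> (forall a, exists r, isk r /\ nu r = a) ->
  (forall a b, d1 (a + b) = d1 a + d1 b) -> (forall (c : k) a, d1 (c *: a) = c *: d1 a) ->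
  (forall a b, d2 (a + b) = d2 a + d2 b) -> (forall (c : k) a, d2 (c *: a) = c *: d2 a) ->
  (forall u, pvalid src tgt u -> d1 (nu (kQpath k u)) = d2 (nu (kQpath k u))) ->
  forall a, d1 a = d2 a.
Proof.
move=> hnu hsurj a1 s1 a2 s2 hu a.
have [r [[hinv [l hl]] <-]] := hsurj a.
elim: l r hinv hl => [|x l IH] r hinv hl.
  have -> : r = (fun _ => 0).
    by apply: functional_extensionality => p; apply/eqP/negPn/negP => /hl.
  rewrite nu0 //.
  by rewrite -(scale0r (0 : A)) s1 s2 !scale0r.
case hx: (pvalid src tgt x); last first.
  apply: IH => // p nz; have := hl _ nz; rewrite in_cons; case/orP => // /eqP e.
  by move: nz; rewrite e hinv ?hx ?eqxx.
pose r' := fun p => if p == x then 0 else r p.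
have hinv' : forall p, ~~ pvalid src tgt p -> r' p = 0.
  by move=> p hp; rewrite /r' hinv // if_same.
have hl' : forall p, r' p != 0 -> p \in l.
  move=> p; rewrite /r'; case: (eqVneq p x) => [_|ne nz]; first by rewrite eqxx.
  by have := hl _ nz; rewrite in_cons (negbTE ne).
have isr' : isk r' by split => //; exists l.
have ispx : isk (kQscale (r x) (kQpath k x)) by apply/isk_scale/isk_path.
have -> : r = kQadd (kQscale (r x) (kQpath k x)) r'.
  apply: functional_extensionality => p; rewrite /kQadd /kQscale /kQpath /r'.
  by case: eqP => [->|]; rewrite ?mulr1 ?addr0 // mulr0 add0r.
case: hnu => ha hs _ _.
by rewrite ha // hs ?a1 ?a2 ?s1 ?s2 ?hu ?IH //; apply: isk_path.
Qed.

Lemma alg_aut_sym (phi phii : A -> A) : alg_aut phi phii -> alg_aut phii phi.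
Proof.
case=> [[ha hs hm h1] [c1 c2]]; split; last by split.
have inj := can_inj c1.
split.
- by move=> a b; apply: inj; rewrite ha !c2.
- by move=> c a; apply: inj; rewrite hs !c2.
- by move=> a b; apply: inj; rewrite hm !c2.
- by apply: inj; rewrite h1 c2.
Qed.

Lemma conj_theta (N1 N2 : kq -> A) (phi phii : A -> A) gamma F d :
  alg_aut phi phii ->
  (forall u, pvalid src tgt u -> phi (N1 (kQpath k u)) = N2 (kQpath k u)) ->
  theta_rep src tgt N1 gamma F d ->
  theta_rep src tgt N2 gamma F (fun a => phi (d (phii a))).
Proof.
move=> haut hN [[da ds dm] hd].
have [[ia iz im i1] _] := alg_aut_sym haut.
case: haut => [[ha hs hm h1] [c1 c2]].
split; first split.
- by move=> a b; rewrite ia da ha.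
- by move=> c a; rewrite iz ds hs.
- by move=> a b; rewrite im dm ha !hm !c2.
move=> u hu; rewrite -hN // c1 hd // hs; congr (_ *: _).
Qed.

End Alg.

Lemma count_lt (T : eqType) (a b : pred T) (l : seq T) :
  (forall x, a x -> b x) -> (exists2 x, x \in l & b x && ~~ a x) ->
  (count a l < count b l)%N.
Proof.
move=> sab; elim: l => [[x]//|y l IH [x]].
rewrite in_cons /= => /orP [/eqP -> /andP [bx nax]|xl hx].
  by rewrite bx (negbTE nax) add0n add1n ltnS; apply: sub_count.
have := IH (ex_intro2 _ _ x xl hx).
by case: (a y) (sab y) => [->//|]; case: (b y) => _; rewrite ?add0n ?add1n // => h; apply: ltnW.
Qed.

Section Exist.
Variables (n : nat) (Ar : finType) (src tgt : Ar -> 'I_n) (k : fieldType) (A : falgType k).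
Notation kq := (kQ n Ar k).
Notation isk := (@is_kQ n Ar src tgt k).
Variables (nu : kq -> A) (x0 : 'I_n) (gamma : 'I_n -> seq (letter Ar)) (F : seq (letter Ar) -> k).
Hypothesis hnu : alg_hom_kQ src tgt nu.
Hypothesis hsurj : forall a, exists r, isk r /\ nu r = a.
Hypothesis hgam : forall x, wv src tgt x0 (gamma x) /\ wend src tgt (x0, gamma x) = x.
Hypothesis hF : pi1_hom src tgt (in_ker src tgt nu) x0 F.

Notation I := (in_ker src tgt nu).
Notation weq := (walk_equiv src tgt I).

Definition W (p : qpath n Ar) := gamma p.1 ++ map inl p.2 ++ winv (gamma (pend tgt p)).
Definition Fw p := F (W p).
Definition D (r : kq) : kq := fun p => Fw p * r p.

Lemma closed_W p : pvalid src tgt p -> closed_at src tgt x0 (W p).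
Proof.
rewrite (pvalidE src) => hp; have [g1 g2] := hgam p.1.
have [g3 g4] := hgam (pend tgt p).
have [g5 g6] := wv_winv g3; rewrite g4 in g5 g6.
split; rewrite /W ?wvalidE ?wv_cat ?wend_cat g2 -(pendE src) ?g1 ?hp ?g5 ?g6 //.
Qed.

Lemma ctx_lemma x s1 s2 y a b z :
  weq (y, a) (y, b) -> wv src tgt x s1 -> wend src tgt (x, s1) = y ->
  wv src tgt y a -> wv src tgt y b -> wend src tgt (y, a) = z -> wend src tgt (y, b) = z ->
  wv src tgt z s2 -> weq (x, s1 ++ a ++ s2) (x, s1 ++ b ++ s2).
Proof.
move=> h v1 e1 va vb ea eb v2.
apply: (we_ctx (w1 := (y, a)) (w2 := (y, b))) => //=.
- by rewrite ea eb.
- by rewrite wvalidE !wv_cat v1 e1 va ea v2.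
- by rewrite wvalidE !wv_cat v1 e1 vb eb v2.
Qed.

Lemma cancel_equiv v s : wv src tgt v s ->
  weq (wend src tgt (v, s), winv s ++ s) (wend src tgt (v, s), [::]).
Proof.
elim/last_ind: s => [|s l IH]; first by move=> _; apply: we_refl.
move=> hsl; have : wv src tgt v (s ++ [:: l]) by rewrite cats1.
rewrite wv_cat => /andP [hs hl]; clear hsl.
have [i1 i2] := wv_winv hs.
move: hl => /= /andP [/eqP el _].
have -> : winv (rcons s l) ++ rcons s l = [:: lflip l] ++ (winv s ++ s) ++ [:: l].
  by rewrite winv_rcons -cats1 /= catA.
have -> : wend src tgt (v, rcons s l) = ltgt src tgt l by rewrite -cats1 wend_cat.
apply: (we_trans (w2 := (ltgt src tgt l, [:: lflip l] ++ [::] ++ [:: l]))).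
  apply: (ctx_lemma (y := wend src tgt (v, s)) (z := wend src tgt (v, s))).
  - exact: (IH hs).
  - by case: l {el} => a /=; rewrite eqxx.
  - by case: l el => a /=.
  - by rewrite wv_cat i1 i2 hs.
  - by [].
  - by rewrite wend_cat i2.
  - by [].
  - by rewrite /= el eqxx.
by case: l el => a _ /=; [apply: we_cancel_tgt | apply: we_cancel_src].
Qed.

Lemma closed_cat s s' : closed_at src tgt x0 s -> closed_at src tgt x0 s' ->
  closed_at src tgt x0 (s ++ s').
Proof.
case=> [v1 e1] [v2 e2]; rewrite wvalidE in v1; rewrite wvalidE in v2.
by split; rewrite ?wvalidE ?wv_cat ?wend_cat e1 ?v1 ?v2 ?e2.
Qed.

Lemma W_split p i :
  pvalid src tgt (p.1, take i p.2) ->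
  pvalid src tgt (pend tgt (p.1, take i p.2), drop i p.2) ->
  Fw p = Fw (pend tgt (p.1, take i p.2), drop i p.2) + Fw (p.1, take i p.2).
Proof.
move=> hb ht; have hp := pvalid_split hb ht.
have [_ hadd] := hF; have [hinv _] := hF.
rewrite /Fw addrC -hadd; try exact: closed_W.
have ez : pend tgt (pend tgt (p.1, take i p.2), drop i p.2) = pend tgt p.
  by rewrite /pend /= -last_cat -map_cat cat_take_drop.
set y := pend tgt (p.1, take i p.2).
have [g1 g2] := hgam y.
apply: hinv; [exact: closed_W | exact: closed_cat (closed_W hb) (closed_W ht) |].
have -> : W p = (gamma p.1 ++ map inl (take i p.2)) ++ [::] ++
   (map inl (drop i p.2) ++ winv (gamma (pend tgt p))).
  by rewrite /W -{1}(cat_take_drop i p.2) map_cat !catA.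
have -> : W (p.1, take i p.2) ++ W (y, drop i p.2) =
   (gamma p.1 ++ map inl (take i p.2)) ++ (winv (gamma y) ++ gamma y) ++
   (map inl (drop i p.2) ++ winv (gamma (pend tgt p))).
  by rewrite /W /= ez !catA.
have hc := cancel_equiv (hgam y).1; rewrite g2 in hc.
have [i1 i2] := wv_winv (hgam y).1; rewrite g2 in i1 i2.
have [g3 g4] := hgam p.1.
have [g5 g6] := hgam (pend tgt p).
have [i3 i4] := wv_winv g5; rewrite g6 in i3 i4.
have hb' : wv src tgt p.1 (map inl (take i p.2)) by move: hb; rewrite pvalidE.
have ht' : wv src tgt y (map inl (drop i p.2)) by move: ht; rewrite pvalidE.
have eb : wend src tgt (p.1, map inl (take i p.2)) = y by rewrite /y (pendE src).
have et : wend src tgt (y, map inl (drop i p.2)) = pend tgt p by rewrite -ez (pendE src).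
apply: we_sym; apply: (ctx_lemma (y := y) (z := y)) => //.
- by rewrite wv_cat g3 g4.
- by rewrite wend_cat g4.
- by rewrite wv_cat i1 i2 g1.
- by rewrite wend_cat i2 g2.
- by rewrite wv_cat ht' et.
Qed.


Lemma isk_e y : isk (kQe k y).
Proof. by apply: isk_path. Qed.

Lemma min_parallel r u p : minimal_relation I r -> r u != 0 -> r p != 0 ->
  p.1 = u.1 /\ pend tgt p = pend tgt u.
Proof.
case=> [[hr hr0] _ hmin] hu hp.
pose S := fun q : qpath n Ar => (q.1 == u.1) && (pend tgt q == pend tgt u).
case hS: (S p); first by move: hS => /andP [/eqP -> /eqP ->].
exfalso; apply: (hmin S).
- by exists u; rewrite /S !eqxx hu.
- by exists p; rewrite hS hp.
have -> : kQ_restrict r S = kQmul tgt (kQe k (pend tgt u)) (kQmul tgt r (kQe k u.1)).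
  rewrite mul_e_right mul_e_left; apply: functional_extensionality => q.
  by rewrite /kQ_restrict /S; case: (q.1 == u.1); case: (pend tgt q == pend tgt u).
have isr : isk (kQmul tgt r (kQe k u.1)) by rewrite mul_e_right; apply: isk_restrict.
case: (hnu) => _ _ hm _.
split; first by apply: isk_mul => //; apply: isk_e.
have := hm _ _ (isk_e (pend tgt u)) isr; move=> ->.
have := hm _ _ hr (isk_e u.1); move=> ->.
by rewrite hr0 mul0r mulr0.
Qed.

Lemma min_rel_const r u v : minimal_relation I r -> r u != 0 -> r v != 0 -> Fw u = Fw v.
Proof.
move=> hmin hu hv; have [e1 e2] := min_parallel hmin hu hv.
have [[hr _] _ _] := hmin.
have vu := valid_nz hr hu; have vv := valid_nz hr hv.
have [hinv _] := hF.
rewrite /Fw; apply: hinv; try exact: closed_W.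
rewrite /W e1 e2.
have [g1 g2] := hgam u.1.
have [g5 g6] := hgam (pend tgt u).
have [i3 i4] := wv_winv g5; rewrite g6 in i3 i4.
apply: (ctx_lemma (y := u.1) (z := pend tgt u)) => //.
- have := we_rel src tgt hmin hu hv; rewrite /path_walk e1; exact.
- by rewrite -(pvalidE src).
- by move: vv; rewrite pvalidE e1.
- by rewrite (pendE src).
- by rewrite -e1 -e2 (pendE src).
Qed.

Lemma isk_D r : isk r -> isk (D r).
Proof.
case=> h [l hl]; split=> [p hp|]; first by rewrite /D h // mulr0.
by exists l => p; rewrite /D mulf_eq0 negb_or => /andP [_ /hl].
Qed.

Lemma D_add r s : D (kQadd r s) = kQadd (D r) (D s).
Proof. by apply: functional_extensionality => p; rewrite /D /kQadd mulrDr. Qed.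

Lemma D_scale c r : D (kQscale c r) = kQscale c (D r).
Proof. by apply: functional_extensionality => p; rewrite /D /kQscale mulrCA. Qed.

Lemma D_mul r s : isk r -> isk s -> D (kQmul tgt r s) = kQadd (kQmul tgt (D r) s) (kQmul tgt r (D s)).
Proof.
move=> hr hs; apply: functional_extensionality => p.
rewrite /D /kQadd /kQmul mulr_sumr -big_split; apply: eq_bigr => i _ /=.
set t := (pend tgt (p.1, take i p.2), drop i p.2).
set b := (p.1, take i p.2).
case: (eqVneq (r t) 0) => [->|nr]; first by rewrite !(mulr0, mul0r, addr0).
case: (eqVneq (s b) 0) => [->|ns]; first by rewrite !(mulr0, mul0r, addr0).
rewrite (W_split (valid_nz hs ns) (valid_nz hr nr)) -/t -/b.
by rewrite mulrDl !mulrA [Fw b * r t]mulrC.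
Qed.

Lemma in_ker_add r s : I r -> I s -> I (kQadd r s).
Proof.
case=> hr er [hs es]; split; first exact: isk_add.
by case: hnu => ha _ _ _; rewrite ha // er es addr0.
Qed.

Lemma D_ker_aux N : forall r l, I r -> (forall p, r p != 0 -> p \in l) ->
  (count (fun p => r p != 0%R) l <= N)%N -> I (D r).
Proof.
elim: N => [|N IH] r l hI hl hc.
  have -> : r = fun _ => 0.
    apply: functional_extensionality => p; apply/eqP/negPn/negP => nz.
    have := hl _ nz => pl.
    have : (0 < count (fun p => r p != 0%R) l)%N by rewrite -has_count; apply/hasP; exists p.
    by rewrite leqn0 in hc; rewrite (eqP hc).
  have -> : D (fun _ => 0) = fun _ => 0.
    by apply: functional_extensionality => p; rewrite /D mulr0.
  split; [exact: (@isk_zero n Ar src tgt k) | exact: (nu0 hnu)].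
case: (classic (exists p, r p != 0)) => [[u hu]|hn]; last first.
  apply: (IH r l hI hl); suff -> : count (fun p => r p != 0%R) l = 0%N by [].
  apply/eqP; rewrite -leqn0 leqNgt -has_count.
  by apply/hasP => -[p _ hp]; apply: hn; exists p.
case: (classic (minimal_relation I r)) => hmin.
  have -> : D r = kQscale (Fw u) r.
    apply: functional_extensionality => p; rewrite /D /kQscale.
    case: (eqVneq (r p) 0) => [->|hp]; first by rewrite !mulr0.
    by rewrite (min_rel_const hmin hp hu).
  case: hI => hr er; split; first exact: isk_scale.
  by case: hnu => _ hs _ _; rewrite hs // er scaler0.
have [S [[p1 h1] [[p2 h2] hS]]] : exists S : pred (qpath n Ar),
    (exists p, S p && (r p != 0)) /\ (exists p, ~~ S p && (r p != 0)) /\ I (kQ_restrict r S).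
  apply: NNPP => hne; apply: hmin; split => // [|S e1 e2 iS]; first by exists u.
  by apply: hne; exists S.
have hr := hI.1.
pose r2 := kQ_restrict r (predC S).
have er : r = kQadd (kQ_restrict r S) r2.
  apply: functional_extensionality => p; rewrite /kQadd /r2 /kQ_restrict /=.
  by case: (S p); rewrite ?addr0 ?add0r.
have hI2 : I r2.
  split; first exact: isk_restrict.
  have := hI.2; rewrite {1}er; case: hnu => ha _ _ _.
  by rewrite ha ?hS.1 ?hS.2 ?add0r //; apply: isk_restrict.
have hp1 : p1 \in l by apply: hl; case/andP: h1.
have hp2 : p2 \in l by apply: hl; case/andP: h2.
rewrite er D_add; apply: in_ker_add.
  apply: (IH _ l hS).
    by move=> p; rewrite /kQ_restrict; case: (S p); [exact: hl | by rewrite eqxx].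
  rewrite -ltnS; apply: leq_trans hc; apply: count_lt.
    by move=> p; rewrite /kQ_restrict; case: (S p) => //; rewrite eqxx.
  by exists p2 => //; rewrite /kQ_restrict; case/andP: h2 => /negbTE -> ->; rewrite eqxx.
apply: (IH _ l hI2).
  by move=> p; rewrite /r2 /kQ_restrict; case: (predC S p); [exact: hl | by rewrite eqxx].
rewrite -ltnS; apply: leq_trans hc; apply: count_lt.
  by move=> p; rewrite /r2 /kQ_restrict; case: (predC S p) => //; rewrite eqxx.
by exists p1 => //; rewrite /r2 /kQ_restrict /=; case/andP: h1 => -> ->; rewrite eqxx.
Qed.

Lemma D_ker r : I r -> I (D r).
Proof.
move=> hI; have [_ [l hl]] := hI.1.
exact: (D_ker_aux hI hl (leqnn _)).
Qed.

Definition pick (a : A) : kq := epsilon (inhabits (fun _ => 0)) (fun r => isk r /\ nu r = a).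
Lemma pickP a : isk (pick a) /\ nu (pick a) = a.
Proof. by apply: (epsilon_spec (inhabits (fun _ => 0)) (fun r => isk r /\ nu r = a)). Qed.

Definition dd (a : A) : A := nu (D (pick a)).

Lemma dd_nu r : isk r -> dd (nu r) = nu (D r).
Proof.
move=> hr; have [hq eq] := pickP (nu r).
case: hnu => ha hs _ _.
pose df := kQadd r (kQscale (-1) (pick (nu r))).
have hdf : isk df by apply: isk_add => //; apply: isk_scale.
have Idf : I df by split => //; rewrite /df ha ?hs ?eq ?scaleN1r ?subrr //; apply: isk_scale.
have [_ e0] := D_ker Idf.
move: e0; rewrite /df D_add D_scale ha ?hs ?scaleN1r; try (by apply: isk_D); last first.
  by apply/isk_scale/isk_D.
by move/eqP; rewrite subr_eq0 => /eqP.
Qed.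

Lemma dd_theta : theta_rep src tgt nu gamma F dd.
Proof.
case: (hnu) => ha hs hm _.
split; first split.
- move=> a b; have [ia <-] := pickP a; have [ib <-] := pickP b.
  rewrite -(ha _ _ ia ib) (dd_nu (isk_add ia ib)) (dd_nu ia) (dd_nu ib) D_add.
  by rewrite (ha _ _ (isk_D ia) (isk_D ib)).
- move=> c a; have [ia <-] := pickP a.
  rewrite -(hs c _ ia) (dd_nu (isk_scale c ia)) (dd_nu ia) D_scale.
  by rewrite (hs _ _ (isk_D ia)).
- move=> a b; have [ia <-] := pickP a; have [ib <-] := pickP b.
  rewrite -(hm _ _ ia ib) (dd_nu (isk_mul ia ib)) (dd_nu ia) (dd_nu ib) (D_mul ia ib).
  rewrite (ha _ _ (isk_mul (isk_D ia) ib) (isk_mul ia (isk_D ib))).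
  by rewrite (hm _ _ (isk_D ia) ib) (hm _ _ ia (isk_D ib)).
move=> u hu; have hpu := isk_path k hu; rewrite (dd_nu hpu).
have -> : D (kQpath k u) = kQscale (Fw u) (kQpath k u).
  apply: functional_extensionality => p; rewrite /D /kQscale /kQpath.
  by case: eqP => [->|]; rewrite ?mulr0.
by rewrite (hs _ _ hpu).
Qed.

End Exist.

Theorem proposition3p3 (k : closedFieldType) (n : nat) (Ar : finType)
  (src tgt : Ar -> 'I_n) (A : falgType k) (e : 'I_n -> A)
  (He : complete_prim_orth e) (Hbasic : basic_wrt e) (Hconn : connected_alg A)
  (Hacyc : acyclic_quiver src tgt)
  (nu : kQ n Ar k -> A) (Hnu : presentation src tgt e nu)
  (psi : kQ n Ar k -> kQ n Ar k) (Hpsi : kQ_aut src tgt psi)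
  (Hpsie : forall i, psi (@kQe n Ar k i) = @kQe n Ar k i)
  (HpsiI : (forall r, in_ker src tgt nu r -> in_ker src tgt nu (psi r)) /\
           (forall s, in_ker src tgt nu s -> exists r, in_ker src tgt nu r /\ psi r = s))
  (psib psibinv : A -> A) (Hpsib : alg_aut psib psibinv)
  (Hpsibmu : forall r, is_kQ src tgt r -> psib (nu (psi r)) = nu (psi (psi r)))
  (T : {set Ar}) (HT : spanning_tree src tgt T) (x0 : 'I_n)
  (gamma : 'I_n -> seq (letter Ar)) (Hgamma : tree_geodesics src tgt T x0 gamma) :
  let mu := fun r => nu (psi r) in
  (forall F, pi1_hom src tgt (in_ker src tgt nu) x0 F ->
     hh1_eq e (theta src tgt mu gamma F) (push psib psibinv (theta src tgt nu gamma F))) /\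
  (forall F, pi1_hom src tgt (in_ker src tgt nu) x0 F -> exists G,
     pi1_hom src tgt (in_ker src tgt nu) x0 G /\
     hh1_eq e (theta src tgt mu gamma F) (push psib psibinv (theta src tgt nu gamma G))) /\
  (forall G, pi1_hom src tgt (in_ker src tgt nu) x0 G -> exists F,
     pi1_hom src tgt (in_ker src tgt nu) x0 F /\
     hh1_eq e (theta src tgt mu gamma F) (push psib psibinv (theta src tgt nu gamma G))).
Proof.
move=> mu.
case: Hnu => hnu hsurj _ _.
have hgam : forall x, wv src tgt x0 (gamma x) /\ wend src tgt (x0, gamma x) = x.
  by move=> x; case: (Hgamma x) => hv hw _ _; rewrite -wvalidE.
case: Hpsi => _ [_ [psi' [h1 _ h3]]].
have Hpb : forall q, is_kQ src tgt q -> psib (nu q) = mu q.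
  by move=> q hq; have := Hpsibmu _ (h1 _ hq); rewrite /mu h3.
have Hpbi : forall q, is_kQ src tgt q -> psibinv (mu q) = nu q.
  by move=> q hq; rewrite -Hpb //; case: Hpsib => _ [c1 _]; apply: c1.
have part1 : forall F, pi1_hom src tgt (in_ker src tgt nu) x0 F ->
     hh1_eq e (theta src tgt mu gamma F) (push psib psibinv (theta src tgt nu gamma F)).
  move=> F hF.
  have hex : exists d, theta_rep src tgt nu gamma F d.
    by exists (dd src tgt nu gamma F); apply: dd_theta.
  have tn : theta_rep src tgt nu gamma F (theta src tgt nu gamma F).
    exact: (epsilon_spec (inhabits id) _ hex).
  have hexm : exists d, theta_rep src tgt mu gamma F d.
    exists (fun a => psib (theta src tgt nu gamma F (psibinv a))).
    apply: (conj_theta Hpsib _ tn) => u hu; apply: Hpb; exact: isk_path.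
  have tm : theta_rep src tgt mu gamma F (theta src tgt mu gamma F).
    exact: (epsilon_spec (inhabits id) _ hexm).
  have tp := conj_theta (alg_aut_sym Hpsib) (fun u hu => Hpbi _ (isk_path k hu)) tm.
  have [[da ds _] cn] := tn; have [[pa ps _] cp] := tp.
  have eq := uniq_der hnu hsurj da ds pa ps (fun u hu => etrans (cn u hu) (esym (cp u hu))).
  exists (fun _ => 0) => a.
  have -> : \sum_i (0 : k) *: e i = 0 by rewrite big1 // => i _; rewrite scale0r.
  rewrite mul0r mulr0 subr0 /push eq.
  by case: Hpsib => _ [c1 c2]; rewrite !c2 subrr.
split; first exact: part1.
split => F hF; exists F; split => //; exact: part1.
Qed.
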